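(* Let $(X,T)$ be a dynamical system with metric $d$, $(Y,S)$ a dynamical system with metric $d'$, and $\pi:(X,T)\to(Y,S)$ an equivariant continuous map. Then $\overline{\mathrm{mdim}}_{\mathrm{M}}(\pi,T,d)=\limsup_{\varepsilon\to0}\left\{\lim_{\delta\to0}\lim_{N\to\infty}\frac{\sup_{y\in Y}\log\#\left(\pi^{-1}(B_\delta(y,d'_N)),d_N,\varepsilon\right)}{N\log(1/\varepsilon)}\right\}$ and $\underline{\mathrm{mdim}}_{\mathrm{M}}(\pi,T,d)=\liminf_{\varepsilon\to0}\left\{\lim_{\delta\to0}\lim_{N\to\infty}\frac{\sup_{y\in Y}\log\#\left(\pi^{-1}(B_\delta(y,d'_N)),d_N,\varepsilon\right)}{N\log(1/\varepsilon)}\right\}$.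
   Context: A dynamical system is a compact metrizable space with a homeomorphism; $\pi$ equivariant means $\pi\circ T=S\circ\pi$. For $N\ge1$, $d_N(x,y)=\max_{0\le n<N}d(T^nx,T^ny)$ and $d'_N$ similarly for $S$. $B_r(y,d'_N)=\{z\in Y: d'_N(z,y)\le r\}$. For $E\subset X$, $\#(E,d_N,\varepsilon)$ is the minimal number of open sets of $d_N$-diameter $<\varepsilon$ covering $E$ ($0$ if empty). The upper and lower conditional metric mean dimensions are $\overline{\mathrm{mdim}}_{\mathrm{M}}(\pi,T,d)=\limsup_{\varepsilon\to0}\lim_{N\to\infty}\frac{\sup_{y\in Y}\log\#(\pi^{-1}(y),d_N,\varepsilon)}{N\log(1/\varepsilon)}$ and $\underline{\mathrm{mdim}}_{\mathrm{M}}(\pi,T,d)$ the same with $\liminf_{\varepsilon\to0}$. *)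

(* Defs.v *)
From HB Require Import structures.
From mathcomp Require Import all_boot all_order all_algebra.
From mathcomp Require Import all_classical all_reals all_analysis.
Set Implicit Arguments. Unset Strict Implicit. Unset Printing Implicit Defensive.
Import Order.TTheory GRing.Theory Num.Theory.
Import numFieldNormedType.Exports.
Local Open Scope classical_set_scope.
Local Open Scope ring_scope.

Section Defs.
Variable R : realType.

Definition is_metric (X : Type) (d : X -> X -> R) :=
  [/\ forall x y, 0 <= d x y,
      forall x y, d x y = 0 <-> x = y,
      forall x y, d x y = d y x &
      forall x y z, d x z <= d x y + d y z].

Definition dopen (X : Type) (d : X -> X -> R) (U : set X) :=
  forall x, U x -> exists2 e : R, 0 < e & [set z | d x z < e] `<=` U.

Definition dcompact (X : Type) (d : X -> X -> R) :=
  forall (I : Type) (U : I -> set X), (forall i, dopen d (U i)) ->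
    (forall x, exists i, U i x) ->
    exists (n : nat) (f : 'I_n -> I), forall x, exists k, U (f k) x.

Definition dcontinuous (X Y : Type) (d : X -> X -> R) (d' : Y -> Y -> R)
  (f : X -> Y) :=
  forall x (e : R), 0 < e -> exists2 del : R, 0 < del &
    forall z, d x z < del -> d' (f x) (f z) < e.

Definition dhomeo (X : Type) (d : X -> X -> R) (T : X -> X) :=
  exists Ti : X -> X, [/\ cancel T Ti, cancel Ti T,
    dcontinuous d d T & dcontinuous d d Ti].

Definition dyn_system (X : Type) (d : X -> X -> R) (T : X -> X) :=
  [/\ is_metric d, dcompact d & dhomeo d T].

Definition dN (X : Type) (d : X -> X -> R) (T : X -> X) (N : nat) (x y : X) : R :=
  \big[Num.max/0]_(n < N) d (iter n T x) (iter n T y).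

Definition ediam (X : Type) (dd : X -> X -> R) (U : set X) : \bar R :=
  ereal_sup [set (dd x y)%:E | x in U & y in U].

Definition covers_with (X : Type) (d : X -> X -> R) (T : X -> X)
  (E : set X) (N : nat) (eps : R) (n : nat) :=
  exists U : 'I_n -> set X,
    [/\ forall i, dopen d (U i),
        forall i, (ediam (dN d T N) (U i) < eps%:E)%E &
        E `<=` \bigcup_i U i].

(** #(E, d_N, eps): the minimal such n (0 if E is empty) *)
Definition covnum (X : Type) (d : X -> X -> R) (T : X -> X)
  (E : set X) (N : nat) (eps : R) : nat :=
  xget 0%N [set n | covers_with d T E N eps n /\
                    forall m, covers_with d T E N eps m -> (n <= m)%N].

Definition logcov (X : Type) (d : X -> X -> R) (T : X -> X)
  (E : set X) (N : nat) (eps : R) : \bar R :=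
  if covnum d T E N eps == 0%N then -oo%E
  else (ln (covnum d T E N eps)%:R)%:E.

Definition elimsup0 (g : R -> \bar R) : \bar R :=
  ereal_inf [set ereal_sup (g @` [set e | 0 < e < r]) | r in [set r : R | 0 < r]].
Definition eliminf0 (g : R -> \bar R) : \bar R :=
  ereal_sup [set ereal_inf (g @` [set e | 0 < e < r]) | r in [set r : R | 0 < r]].

Definition fib_quot (X Y : Type) (d : X -> X -> R) (T : X -> X) (pi : X -> Y)
  (N : nat) (eps : R) : \bar R :=
  (ereal_sup [set logcov d T (pi @^-1` [set y]) N eps | y in [set: Y]]
   * ((N%:R * ln (1 / eps))^-1)%:E)%E.

Definition fib_lim (X Y : Type) (d : X -> X -> R) (T : X -> X) (pi : X -> Y)
  (eps : R) : \bar R :=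
  lim ((fun N : nat => fib_quot d T pi N.+1 eps) @ \oo).

Definition mdimM_upper (X Y : Type) (d : X -> X -> R) (T : X -> X) (pi : X -> Y) :=
  elimsup0 (fib_lim d T pi).
Definition mdimM_lower (X Y : Type) (d : X -> X -> R) (T : X -> X) (pi : X -> Y) :=
  eliminf0 (fib_lim d T pi).

Definition dball (Y : Type) (d' : Y -> Y -> R) (S : Y -> Y) (N : nat)
  (y : Y) (del : R) : set Y :=
  [set z | dN d' S N z y <= del].

Definition ball_quot (X Y : Type) (d : X -> X -> R) (T : X -> X)
  (d' : Y -> Y -> R) (S : Y -> Y) (pi : X -> Y) (N : nat) (eps del : R) : \bar R :=
  (ereal_sup [set logcov d T (pi @^-1` dball d' S N y del) N eps | y in [set: Y]]
   * ((N%:R * ln (1 / eps))^-1)%:E)%E.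

Definition ball_lim (X Y : Type) (d : X -> X -> R) (T : X -> X)
  (d' : Y -> Y -> R) (S : Y -> Y) (pi : X -> Y) (eps : R) : \bar R :=
  lim ((fun del : R =>
          lim ((fun N : nat => ball_quot d T d' S pi N.+1 eps del) @ \oo))
       @ 0^'+).

End Defs.

(* Main.v *)
Require Import Defs.
From HB Require Import structures.
From mathcomp Require Import all_boot all_order all_algebra.
From mathcomp Require Import all_classical all_reals all_analysis.
From mathcomp Require Import ring lra.
Import Order.TTheory GRing.Theory Num.Theory.
Local Open Scope classical_set_scope.
Local Open Scope ring_scope.

Module Aux.
Set Implicit Arguments. Unset Strict Implicit. Unset Printing Implicit Defensive.
Import numFieldNormedType.Exports.

Section DN.
Variable R : realType.
Variable X : Type.
Variable d : X -> X -> R.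
Variable T : X -> X.

Lemma dN0 x y : dN d T 0 x y = 0.
Proof. by rewrite /dN big_ord0. Qed.

Lemma dNS N x y : dN d T N.+1 x y = Num.max (d x y) (dN d T N (T x) (T y)).
Proof. by rewrite /dN big_ord_recl; congr Num.max; apply: eq_bigr => i _; rewrite /= -!iterSr. Qed.

Lemma dN_le N x y c :
  (0 <= c /\ forall n, (n < N)%N -> d (iter n T x) (iter n T y) <= c) <-> dN d T N x y <= c.
Proof.
elim: N x y => [|N IH] x y.
  by rewrite dN0; split; [case|move=> h; split].
rewrite dNS ge_max; split.
  case=> c0 h; apply/andP; split; first exact: (h 0%N).
  by apply/IH; split=> // n hn; have := h n.+1 hn; rewrite !iterSr.
move=> /andP[h1 /IH [c0 h]]; split=> // -[|n] hn; first exact: h1.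
by rewrite !iterSr; apply: h.
Qed.

Lemma dN_ge0 N x y : 0 <= dN d T N x y.
Proof.
elim: N x y => [|N IH] x y; first by rewrite dN0.
by rewrite dNS le_max IH orbT.
Qed.

Lemma dN_term N n x y : (n < N)%N -> d (iter n T x) (iter n T y) <= dN d T N x y.
Proof. by move=> hn; have [_ h] := (proj2 (dN_le N x y (dN d T N x y)) (lexx _)); apply: h. Qed.

Lemma dN_split N M x y c :
  dN d T (N + M) x y <= c <-> dN d T N x y <= c /\ dN d T M (iter N T x) (iter N T y) <= c.
Proof.
split.
  move=> /dN_le [c0 h]; split; apply/dN_le; split=> // n hn.
    by apply: h; apply: (leq_trans hn); apply: leq_addr.
  by rewrite -!iterD; apply: h; rewrite addnC ltn_add2l.
case=> /dN_le [c0 h1] /dN_le [_ h2]; apply/dN_le; split=> // n hn.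
case: (ltnP n N) => hnN; first exact: h1.
have -> : n = (n - N + N)%N by rewrite subnK.
rewrite !iterD; apply: h2; rewrite -(ltn_add2r N) subnK //.
by rewrite addnC.
Qed.

Lemma dN_mono N M x y : (N <= M)%N -> dN d T N x y <= dN d T M x y.
Proof.
move=> hNM; apply/dN_le; split; first exact: dN_ge0.
move=> n hn; apply: dN_term; exact: leq_trans hn hNM.
Qed.

Hypothesis dm : is_metric d.

Lemma dN_sym N x y : dN d T N x y = dN d T N y x.
Proof. case: dm => _ _ hs _; rewrite /dN; apply: eq_bigr => i _; exact: hs. Qed.

Lemma dN_tri N x y z : dN d T N x z <= dN d T N x y + dN d T N y z.
Proof.
case: dm => h0 _ _ ht.
apply/dN_le; split; first by rewrite addr_ge0 // dN_ge0.
move=> n hn; apply: (le_trans (ht _ (iter n T y) _)).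
by apply: lerD; apply: dN_term.
Qed.

Lemma dN_refl N x : dN d T N x x = 0.
Proof.
case: dm => h0 he _ _; apply/eqP; rewrite eq_le dN_ge0 andbT.
apply/dN_le; split=> // n _; by rewrite (proj2 (he _ _) erefl).
Qed.

Lemma dN_le0 N x y : (0 < N)%N -> dN d T N x y <= 0 -> x = y.
Proof.
case: dm => h0 he _ _ hN h.
have := le_trans (dN_term x y hN) h => /= h1.
by apply/he; apply/eqP; rewrite eq_le h1 h0.
Qed.

End DN.


Section Cont.
Variable R : realType.

Lemma dcont_comp (A B C : Type) (sa : A -> A -> R) (sb : B -> B -> R) (sc : C -> C -> R)
  (f : A -> B) (g : B -> C) :
  dcontinuous sa sb f -> dcontinuous sb sc g -> dcontinuous sa sc (g \o f).
Proof.
move=> hf hg x e e0; have [d1 d10 h1] := hg (f x) e e0.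
have [d2 d20 h2] := hf x d1 d10; exists d2 => // z hz; exact/h1/h2.
Qed.

Lemma dcont_id (A : Type) (sa : A -> A -> R) : dcontinuous sa sa id.
Proof. by move=> x e e0; exists e. Qed.

Lemma dcont_iter (A : Type) (sa : A -> A -> R) (T : A -> A) n :
  dcontinuous sa sa T -> dcontinuous sa sa (iter n T).
Proof.
move=> hT; elim: n => [|n IH]; first exact: dcont_id.
have -> : iter n.+1 T = T \o iter n T by apply: funext => x; rewrite iterS.
exact: (dcont_comp IH hT).
Qed.

Lemma dcont_dN (A B : Type) (sa : A -> A -> R) (rho : B -> B -> R) (Q : B -> B) L
  (f : A -> B) :
  dcontinuous sa rho f -> dcontinuous rho rho Q -> dcontinuous sa (dN rho Q L) f.
Proof.
move=> + hQ; elim: L f => [|L IH] f hf.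
  by move=> x e e0; exists 1 => // z _; rewrite dN0.
have hQf := IH (Q \o f) (dcont_comp hf hQ).
move=> x e e0; have [d1 d10 h1] := hf x e e0; have [d2 d20 h2] := hQf x e e0.
exists (Num.min d1 d2); first by rewrite lt_min d10.
move=> z; rewrite lt_min => /andP[z1 z2].
by rewrite dNS gt_max h1 //= (h2 _ z2).
Qed.

Lemma dopen_set0 (A : Type) (sa : A -> A -> R) : dopen sa set0.
Proof. by move=> x. Qed.

Lemma dopen_setT (A : Type) (sa : A -> A -> R) : dopen sa setT.
Proof. by move=> x _; exists 1. Qed.

Lemma dopen_preimage (A B : Type) (sa : A -> A -> R) (sb : B -> B -> R) (f : A -> B) U :
  dcontinuous sa sb f -> dopen sb U -> dopen sa (f @^-1` U).
Proof.
move=> hf hU x /hU [e e0 he]; have [d0 d00 h] := hf x e e0.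
by exists d0 => // z /h /he.
Qed.

Lemma dopenI (A : Type) (sa : A -> A -> R) U V :
  dopen sa U -> dopen sa V -> dopen sa (U `&` V).
Proof.
move=> hU hV x [/hU [e1 e10 h1] /hV [e2 e20 h2]].
exists (Num.min e1 e2); first by rewrite lt_min e10.
by move=> z /=; rewrite lt_min => /andP[z1 z2]; split; [exact: h1|exact: h2].
Qed.

Lemma dopen_bigcup (A I : Type) (sa : A -> A -> R) (U : I -> set A) (P : set I) :
  (forall i, dopen sa (U i)) -> dopen sa (\bigcup_(i in P) U i).
Proof.
move=> hU x [i Pi /hU [e e0 he]]; exists e => // z /he Uz; by exists i.
Qed.

Variables (A B : Type) (sa : A -> A -> R) (rho : B -> B -> R) (Q : B -> B) (L : nat)
  (f : A -> B).
Hypothesis rhom : is_metric rho.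
Hypothesis hf : dcontinuous sa (dN rho Q L) f.

Lemma dopen_dN_lt z0 t : dopen sa [set w | dN rho Q L (f w) z0 < t].
Proof.
move=> w /= hw; have e0 : 0 < t - dN rho Q L (f w) z0 by rewrite subr_gt0.
have [dl dl0 h] := hf w e0.
exists dl => // w' /h hw'; rewrite /=.
apply: (le_lt_trans (dN_tri Q rhom L (f w') (f w) z0)).
by rewrite (dN_sym Q rhom) -ltrBrDr.
Qed.

Lemma dopen_dN_gt z0 t : dopen sa [set w | t < dN rho Q L (f w) z0].
Proof.
move=> w /= hw; have e0 : 0 < dN rho Q L (f w) z0 - t by rewrite subr_gt0.
have [dl dl0 h] := hf w e0.
exists dl => // w' /h hw'; rewrite /=.
have := dN_tri Q rhom L (f w) (f w') z0.
move: hw'; rewrite ltrBrDl => h1 h2.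
rewrite -(ltrD2l (dN rho Q L (f w) (f w'))); apply: (lt_le_trans _ h2).
by rewrite addrC.
Qed.

End Cont.


Section Cov.
Variable R : realType.

Lemma ediam_ltP (A : Type) (dd : A -> A -> R) (U : set A) (e : R) :
  (ediam dd U < e%:E)%E <-> exists2 e', e' < e & forall x y, U x -> U y -> dd x y <= e'.
Proof.
split.
- rewrite /ediam; case E: (ereal_sup _) => [r| |] //.
  + move=> hr; exists r; first by rewrite -lte_fin.
    move=> x y Ux Uy; rewrite -lee_fin -E; apply: ereal_sup_ubound.
    by exists x => //; exists y.
  + move=> _; exists (e - 1); first by rewrite ltrBlDr ltrDl.
    move=> x y Ux Uy.
    have : ((dd x y)%:E <= -oo)%E.
      by rewrite -E; apply: ereal_sup_ubound; exists x => //; exists y.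
    by rewrite leeNy_eq.
- case=> e' he' h; apply: (@le_lt_trans _ _ e'%:E); last by rewrite lte_fin.
  apply: ge_ereal_sup => _ [x Ux [y Uy <-]]; rewrite lee_fin; exact: h.
Qed.

Lemma covers_fin (A : Type) (d : A -> A -> R) (T : A -> A) E N e (I : finType)
  (U : I -> set A) :
  (forall i, dopen d (U i)) -> (forall i, (ediam (dN d T N) (U i) < e%:E)%E) ->
  E `<=` \bigcup_i U i -> covers_with d T E N e #|I|.
Proof.
move=> ho hd hc; exists (fun k => U (enum_val k)); split.
- by move=> k; apply: ho.
- by move=> k; apply: hd.
- move=> x /hc [i _ Ui]; exists (enum_rank i) => //; by rewrite enum_rankK.
Qed.

End Cov.

Section Covnum.
Variable R : realType.
Variables (X : Type) (d : X -> X -> R) (T : X -> X).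
Hypotheses (dm : is_metric d) (hT : dcontinuous d d T) (hc : dcompact d).
Variable eps : R.
Hypothesis heps : 0 < eps.

Lemma covers_exists E N : exists n, covers_with d T E N eps n.
Proof.
have h3 : eps / 3 + eps / 3 < eps by move: heps; lra.
have hid : dcontinuous d (dN d T N) id by apply: dcont_dN => //; exact: dcont_id.
pose B x := [set z | dN d T N z x < eps / 3].
have hBo : forall x, dopen d (B x).
  by move=> x; apply: (@dopen_dN_lt _ _ _ d d T N id dm hid x).
have hBc : forall x, exists i, B i x.
  by move=> x; exists x; rewrite /B /= dN_refl // divr_gt0.
have [n [f hf]] := hc hBo hBc.
exists n, (fun k => B (f k)); split.
- by move=> k; apply: (@dopen_dN_lt _ _ _ d d T N id dm hid).
- move=> k; apply/ediam_ltP; exists (eps / 3 + eps / 3).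
    exact: h3.
  move=> x y; rewrite /B /= => hx hy.
  apply: (le_trans (dN_tri T dm N x (f k) y)); rewrite (dN_sym T dm N (f k) y).
  by apply: lerD; apply: ltW.
- move=> x _; have [k hk] := hf x; by exists k.
Qed.

Lemma covnum_spec E N : covers_with d T E N eps (covnum d T E N eps) /\
  forall m, covers_with d T E N eps m -> (covnum d T E N eps <= m)%N.
Proof.
suff : exists n, covers_with d T E N eps n /\ forall m, covers_with d T E N eps m -> (n <= m)%N.
  by move=> /(xgetPex 0%N).
have ex : exists n, `[< covers_with d T E N eps n >] by have [n hn] := covers_exists E N; exists n; apply/asboolP.
case: (ex_minnP ex) => m /asboolP hm hmin; exists m; split=> // k hk; apply: hmin; exact/asboolP.
Qed.

Lemma covnum_min E N m : covers_with d T E N eps m -> (covnum d T E N eps <= m)%N.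
Proof. by have [_ h] := covnum_spec E N; apply: h. Qed.

Lemma covnum_mono E F N : E `<=` F -> (covnum d T E N eps <= covnum d T F N eps)%N.
Proof.
move=> EF; have [[U [h1 h2 h3]] _] := covnum_spec F N.
apply: covnum_min; exists U; split=> //; exact: subset_trans h3.
Qed.

Lemma covnum_pos E N x : E x -> (0 < covnum d T E N eps)%N.
Proof.
move=> Ex; have [[U [_ _ h3]] _] := covnum_spec E N.
case: (covnum d T E N eps) U h3 => // U h3; have [[i ?] _ _] := h3 x Ex; by [].
Qed.

Lemma covnum_Nmono E N M : (N <= M)%N -> (covnum d T E N eps <= covnum d T E M eps)%N.
Proof.
move=> NM; have [[U [h1 h2 h3]] _] := covnum_spec E M.
apply: covnum_min; exists U; split=> // i.
have /ediam_ltP [e' he' h] := h2 i; apply/ediam_ltP; exists e' => // x y Ux Uy.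
apply: le_trans (h x y Ux Uy); exact: dN_mono.
Qed.

Lemma covnum_mul E E1 E2 N M :
  (forall x, E x -> E1 x /\ E2 (iter N T x)) ->
  (covnum d T E (N + M) eps <= covnum d T E1 N eps * covnum d T E2 M eps)%N.
Proof.
move=> hE; have [[U1 [ho1 hd1 hc1]] _] := covnum_spec E1 N.
have [[U2 [ho2 hd2 hc2]] _] := covnum_spec E2 M.
set n1 := covnum d T E1 N eps in U1 ho1 hd1 hc1 *.
set n2 := covnum d T E2 M eps in U2 ho2 hd2 hc2 *.
pose U (p : 'I_n1 * 'I_n2) := U1 p.1 `&` (iter N T @^-1` U2 p.2).
have -> : (n1 * n2 = #|{: 'I_n1 * 'I_n2}|)%N by rewrite card_prod !card_ord.
apply: covnum_min; apply: (@covers_fin _ _ _ _ _ _ _ _ U).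
- move=> p; apply: dopenI => //; apply: dopen_preimage => //; exact: dcont_iter.
- move=> p; have /ediam_ltP [e1 he1 h1] := hd1 p.1; have /ediam_ltP [e2 he2 h2] := hd2 p.2.
  apply/ediam_ltP; exists (Num.max e1 e2); first by rewrite gt_max he1.
  move=> x y [ux1 ux2] [uy1 uy2]; apply/dN_split; split.
    by rewrite le_max h1.
  by rewrite le_max (h2 _ _ ux2 uy2) orbT.
- move=> x /hE [/hc1 [i _ hi] /hc2 [j _ hj]]; by exists (i, j).
Qed.

End Covnum.


Section Real.
Variable R : realType.

Lemma block_ev (w : nat -> R) (L : nat) (a b : R) : (0 < L)%N -> 0 <= a -> 0 <= b ->
  (forall q r, (r <= L)%N -> w (q * L + r)%N <= q%:R * a + b) ->
  forall eta, 0 < eta -> exists N0, forall N, (N0 <= N)%N -> w N / N%:R <= a / L%:R + eta.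
Proof.
move=> hL ha hb hw eta he.
exists (Num.bound (b / eta)).+1 => N hN.
have hN0 : (0 < N)%N by apply: leq_trans hN.
have nN : 0 < N%:R :> R by rewrite ltr0n.
have lL : 0 < L%:R :> R by rewrite ltr0n.
have hb' : b / eta < N%:R.
  apply: lt_le_trans (archi_boundP _) _; first by rewrite divr_ge0 // ltW.
  by rewrite ler_nat; apply: ltnW.
have hb'' : b < N%:R * eta by rewrite -ltr_pdivrMr.
have hq : ((N %/ L)%:R * L%:R <= N%:R :> R) by rewrite -natrM ler_nat leq_trunc_div.
have hwN := hw (N %/ L)%N (N %% L)%N (ltnW (ltn_pmod _ hL)).
rewrite -divn_eq in hwN.
rewrite ler_pdivrMr //.
set t := a / L%:R.
have ht : t * L%:R = a by rewrite /t divfK // gt_eqF.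
have t0 : 0 <= t by rewrite /t divr_ge0 // ltW.
set q := (N %/ L)%:R in hq hwN.
have : t * (q * L%:R) <= t * N%:R by rewrite ler_wpM2l.
rewrite mulrA (mulrC t q) -mulrA ht.
move: hwN hb''; set W := w N; set n := N%:R.
move=> h1 h2 h3; rewrite mulrDl; lra.
Qed.

Lemma fekete (w : nat -> R) : (forall N, 0 <= w N) ->
  (forall L, (0 < L)%N -> forall eta, 0 < eta ->
     exists N0, forall N, (N0 <= N)%N -> w N / N%:R <= w L / L%:R + eta) ->
  (fun N => w N.+1 / N.+1%:R) @ \oo --> inf [set w N.+1 / N.+1%:R | N in [set: nat]].
Proof.
move=> w0 hw.
set A := [set w N.+1 / N.+1%:R | N in [set: nat]].
have hA : has_lbound A by exists 0 => _ [N _ <-]; rewrite divr_ge0.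
have nA : A !=set0 by exists (w 1%N / 1%:R); exists 0%N.
apply/cvgrPdist_le => e e0.
have e20 : 0 < e / 2 by rewrite divr_gt0.
have hiA : has_inf A by split.
have [_ [L _ <-] hL] := inf_adherent e20 hiA.
have [N0 hN0] := hw L.+1 isT (e / 2) e20.
exists N0 => // N /= hN.
have h1 : inf A <= w N.+1 / N.+1%:R by apply: ge_inf => //; exists N.
have h2 := hN0 N.+1 (leqW hN).
move: h1 h2 hL; set u := w N.+1 / N.+1%:R; set v := w L.+1 / L.+1%:R; move=> h1 h2 h3.
rewrite ler_norml; apply/andP; split; lra.
Qed.

End Real.


Lemma dopenU (R : realType) (A : Type) (sa : A -> A -> R) U V :
  dopen sa U -> dopen sa V -> dopen sa (U `|` V).
Proof.
move=> hU hV x [/hU [e e0 h]|/hV [e e0 h]]; exists e => // z hz; [left|right]; exact: h.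
Qed.

Lemma cvg_EFin_k (R : realType) (U : Type) (F : set_system U) (FF : Filter F)
  (f : U -> R) (l k : R) :
  f @ F --> l -> (fun x => (f x * k)%:E) @ F --> (l * k)%:E.
Proof.
move=> hf; apply: cvg_EFin; first by near=> x.
exact: (cvgM hf (cvg_cst k)).
Unshelve. all: by end_near.
Qed.

Section Main.
Variable R : realType.
Variables (X Y : Type) (d : X -> X -> R) (T : X -> X) (d' : Y -> Y -> R) (S : Y -> Y)
  (pi : X -> Y).
Hypotheses (dm : is_metric d) (hT : dcontinuous d d T) (hc : dcompact d).
Hypotheses (dm' : is_metric d') (hS : dcontinuous d' d' S) (hc' : dcompact d').
Hypotheses (hpi : dcontinuous d d' pi) (heq : forall x, pi (T x) = S (pi x)).
Variable eps : R.
Hypothesis heps : 0 < eps.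

Definition cc (del : R) N y := covnum d T (pi @^-1` dball d' S N y del) N eps.
Definition MM N := covnum d T setT N eps.

Lemma iter_eq n x : pi (iter n T x) = iter n S (pi x).
Proof. by elim: n => //= n IH; rewrite heq IH. Qed.

Lemma cc_bound del N y : (cc del N y <= MM N)%N.
Proof. exact: (covnum_mono dm hT hc heps). Qed.

Lemma cc_mono del1 del2 N y : del1 <= del2 -> (cc del1 N y <= cc del2 N y)%N.
Proof. move=> h; apply: (covnum_mono dm hT hc heps) => x /= hx; exact: le_trans hx h. Qed.

Lemma cc_mul del N M y : (cc del (N + M) y <= cc del N y * cc del M (iter N S y))%N.
Proof.
apply: (covnum_mul dm hT hc heps) => // x /= /dN_split [h1 h2]; split=> //; by rewrite iter_eq.
Qed.

Lemma cc_blocks del L K : (forall y, (cc del L y <= K)%N) ->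
  forall q r y, (r <= L)%N -> (cc del (q * L + r) y <= K ^ q * MM L)%N.
Proof.
move=> hK; elim=> [|q IH] r y hr.
  rewrite mul0n add0n expn0 mul1n; apply: leq_trans (cc_bound _ _ _) _.
  exact: (covnum_Nmono dm hT hc heps).
rewrite mulSn -addnA; apply: leq_trans (cc_mul _ _ _ _) _.
by rewrite expnS -mulnA leq_mul // IH.
Qed.

Lemma cover_nbhd E N : exists2 W, dopen d W & E `<=` W /\
  forall F, F `<=` W -> (covnum d T F N eps <= covnum d T E N eps)%N.
Proof.
have [[U [h1 h2 h3]] _] := covnum_spec dm hT hc heps E N.
exists (\bigcup_i U i); first exact: dopen_bigcup.
split=> // F hF; apply: (covnum_min dm hT hc heps) => //; exists U; split=> //.
Qed.

Lemma cc0_fiber L y : (0 < L)%N -> pi @^-1` dball d' S L y 0 = pi @^-1` [set y].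
Proof.
move=> hL; apply/seteqP; split=> x /=.
  by move=> h; apply: (dN_le0 dm' hL h).
by move=> ->; rewrite /dball /= (dN_refl S dm').
Qed.

Lemma step1 L y : exists n, forall F, F `<=` pi @^-1` dball d' S L y (n.+1%:R^-1) ->
  (covnum d T F L eps <= cc 0 L y)%N.
Proof.
have [W hWo [hEW hW]] := cover_nbhd (pi @^-1` dball d' S L y 0) L.
pose O (n : nat) := W `|` [set z | n.+1%:R^-1 < dN d' S L (pi z) y].
have hdc : dcontinuous d (dN d' S L) pi by exact: dcont_dN.
have hO : forall n, dopen d (O n).
  move=> n; apply: dopenU => //; exact: (@dopen_dN_gt _ _ _ d d' S L pi dm' hdc).
have hcov : forall z, exists n, O n z.
  move=> z; have [Wz|nWz] := pselect (W z); first by exists 0%N; left.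
  have : 0 < dN d' S L (pi z) y.
    rewrite lt_neqAle dN_ge0 andbT; apply/negP => /eqP h0; apply: nWz; apply: hEW.
    by rewrite /preimage /dball /= -h0.
  move=> /ltr_add_invr [k hk]; exists k; right; by rewrite /= -(add0r (_^-1)).
have [m [f hf]] := hc hO hcov.
exists (\max_(k < m) f k)%N => F hF; apply: hW => x /hF /= hx.
have [k hk] := hf x; case: hk => // hk.
have : (f k).+1%:R^-1 < ((\max_(k < m) f k).+1%:R^-1 : R) by exact: lt_le_trans hk hx.
rewrite ltf_pV2 ?posrE ?ltr0Sn // ltr_nat ltnS leqNgt => /negP; case.
rewrite ltnS; exact: leq_bigmax.
Qed.

Lemma step2 L K : (0 < L)%N -> (forall y, (cc 0 L y <= K)%N) ->
  exists2 del, 0 < del & forall y, (cc del L y <= K)%N.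
Proof.
move=> hL hK.
have [nf hnf] := choice (step1 L).
pose G y := [set y' | dN d' S L y' y < (nf y).+1%:R^-1 / 2].
have hdc : dcontinuous d' (dN d' S L) id by apply: dcont_dN => //; exact: dcont_id.
have hGo : forall y, dopen d' (G y).
  by move=> y; apply: (@dopen_dN_lt _ _ _ d' d' S L id dm' hdc).
have hGc : forall y, exists i, G i y.
  by move=> y; exists y; rewrite /G /= (dN_refl S dm') divr_gt0 // invr_gt0 ltr0Sn.
have [m [g hg]] := hc' hGo hGc.
exists ((\max_(k < m) nf (g k))%N.+1%:R^-1 / 2).
  by rewrite divr_gt0 // invr_gt0 ltr0Sn.
move=> y; have [k hk] := hg y.
apply: leq_trans (hnf (g k) _ _) (hK (g k)) => x /= hx.
rewrite /dball /=.
have hk' : (nf (g k) <= \max_(k < m) nf (g k))%N.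
  exact: (@leq_bigmax _ (fun k => nf (g k)) k).
have hle : ((\max_(k < m) nf (g k))%N.+1%:R^-1 : R) <= (nf (g k)).+1%:R^-1.
  by rewrite lef_pV2 ?posrE ?ltr0Sn // ler_nat ltnS.
have := dN_tri S dm' L (pi x) y (g k).
move: hk hx hle; rewrite /G /dball /=.
set a := dN d' S L (pi x) (g k); set b := dN d' S L y (g k); set c := dN d' S L (pi x) y.
set u := ((nf (g k)).+1%:R^-1); set w := ((\max_(k < m) nf (g k)).+1%:R^-1).
move=> h1 h2 h3 h4; lra.
Qed.

Variable x0 : X.

Definition Bm del N : nat := xget 0%N [set B | (exists y, cc del N y = B) /\ forall y, (cc del N y <= B)%N].

Lemma Bm_spec del N : (exists y, cc del N y = Bm del N) /\ forall y, (cc del N y <= Bm del N)%N.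
Proof.
suff : exists B, (exists y, cc del N y = B) /\ forall y, (cc del N y <= B)%N.
  by move=> /(xgetPex 0%N).
have ex : exists n, `[< exists y, cc del N y = n >] by exists (cc del N (pi x0)); apply/asboolP; exists (pi x0).
have ub : forall n, `[< exists y, cc del N y = n >] -> (n <= MM N)%N.
  by move=> n /asboolP [y <-]; apply: cc_bound.
case: (ex_maxnP ex ub) => m /asboolP hm hmax; exists m; split=> // y.
by apply: hmax; apply/asboolP; exists y.
Qed.

Lemma cc_pos del N : 0 <= del -> (0 < cc del N (pi x0))%N.
Proof.
move=> h; apply: (@covnum_pos _ _ _ _ dm hT hc _ heps _ _ x0).
by rewrite /preimage /dball /= (dN_refl S dm').
Qed.

Lemma Bm_pos del N : 0 <= del -> (0 < Bm del N)%N.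
Proof. move=> h; apply: leq_trans (cc_pos N h) _; by have [_ ->] := Bm_spec del N. Qed.

Lemma MM_pos N : (0 < MM N)%N.
Proof. exact: (@covnum_pos _ _ _ _ dm hT hc _ heps _ _ x0). Qed.

Lemma sup_eq del N : 0 <= del ->
  ereal_sup [set logcov d T (pi @^-1` dball d' S N y del) N eps | y in [set: Y]]
  = (ln (Bm del N)%:R)%:E.
Proof.
move=> h0; have [[y hy] hB] := Bm_spec del N; have hBp := Bm_pos N h0.
apply/eqP; rewrite eq_le; apply/andP; split.
  apply: ge_ereal_sup => _ [y' _ <-]; rewrite /logcov.
  case: eqP => [_|/eqP hne]; first exact: leNye.
  rewrite lee_fin ler_ln; [rewrite ler_nat; exact: hB | by rewrite posrE ltr0n lt0n | by rewrite posrE ltr0n].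
apply: le_ereal_sup_tmp; exists ((ln (Bm del N)%:R)%:E) => //.
exists y => //; rewrite /logcov -/(cc del N y) hy.
by rewrite ifF //; apply/eqP => h; move: hBp; rewrite h.
Qed.

Definition ww del N := ln ((Bm del N)%:R : R).

Lemma ball_quot_eq del N : 0 <= del ->
  ball_quot d T d' S pi N eps del = ((ww del N / N%:R) * (ln (1 / eps))^-1)%:E.
Proof.
move=> h0; rewrite /ball_quot sup_eq // -EFinM invfM mulrA //.
Qed.

Lemma fib_quot_eq N : (0 < N)%N -> fib_quot d T pi N eps = ball_quot d T d' S pi N eps 0.
Proof.
move=> hN; rewrite /fib_quot /ball_quot; congr (ereal_sup _ * _)%E.
by apply: eq_imagel => y _; rewrite cc0_fiber.
Qed.

Lemma ww_ge0 del N : 0 <= del -> 0 <= ww del N.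
Proof. move=> h; rewrite /ww ln_ge0 // ler1n; exact: Bm_pos. Qed.

Lemma Bm_mono del1 del2 N : del1 <= del2 -> (Bm del1 N <= Bm del2 N)%N.
Proof.
move=> h; have [[y <-] _] := Bm_spec del1 N; have [_ hB] := Bm_spec del2 N.
exact: leq_trans (cc_mono _ _ h) (hB y).
Qed.

Lemma ww_mono del1 del2 N : 0 <= del1 -> del1 <= del2 -> ww del1 N <= ww del2 N.
Proof.
move=> h0 h; rewrite /ww ler_ln; [rewrite ler_nat; exact: Bm_mono| |];
  rewrite posrE ltr0n Bm_pos //; exact: le_trans h.
Qed.

Lemma ww_block del L K : 0 <= del -> (forall y, (cc del L y <= K)%N) ->
  forall q r, (r <= L)%N -> ww del (q * L + r) <= q%:R * ln (K%:R : R) + ln ((MM L)%:R : R).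
Proof.
move=> h0 hK q r hr.
have K0 : (0 < K)%N by apply: leq_trans (cc_pos L h0) (hK _).
have [[y hy] _] := Bm_spec del (q * L + r).
have hb := cc_blocks hK q y hr.
rewrite /ww -hy.
have -> : q%:R * ln (K%:R : R) + ln ((MM L)%:R : R) = ln ((K ^ q * MM L)%:R : R).
  rewrite natrM lnM ?posrE ?ltr0n ?expn_gt0 ?K0 ?MM_pos // natrX lnXn ?ltr0n //.
  by rewrite mulr_natl.
rewrite ler_ln; [by rewrite ler_nat| |]; rewrite posrE ltr0n //.
  by rewrite hy; apply: Bm_pos.
by rewrite muln_gt0 expn_gt0 K0 MM_pos.
Qed.

Lemma ww_ev del : 0 <= del -> forall L, (0 < L)%N -> forall eta, 0 < eta ->
  exists N0, forall N, (N0 <= N)%N -> ww del N / N%:R <= ww del L / L%:R + eta.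
Proof.
move=> h0 L hL eta he.
have [_ hB] := Bm_spec del L.
apply: (block_ev hL (ww_ge0 L h0) _ (ww_block h0 hB)) => //.
by rewrite ln_ge0 // ler1n MM_pos.
Qed.

Definition hinf del := inf [set ww del N.+1 / N.+1%:R | N in [set: nat]].

Lemma ww_cvg del : 0 <= del -> (fun N => ww del N.+1 / N.+1%:R) @ \oo --> hinf del.
Proof. move=> h0; apply: fekete; [move=> N; exact: ww_ge0 | exact: ww_ev]. Qed.

Lemma hinf_lb del : 0 <= del -> has_lbound [set ww del N.+1 / N.+1%:R | N in [set: nat]].
Proof. by move=> h0; exists 0 => _ [N _ <-]; rewrite divr_ge0 // ww_ge0. Qed.

Lemma hinf_le del N : 0 <= del -> hinf del <= ww del N.+1 / N.+1%:R.
Proof. by move=> h0; apply: ge_inf; [exact: hinf_lb | exists N]. Qed.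

Lemma hinf_ge del : 0 <= del -> hinf 0 <= hinf del.
Proof.
move=> h0; apply: lb_le_inf; first by exists (ww del 1 / 1%:R); exists 0%N.
move=> _ [N _ <-]; apply: le_trans (hinf_le N (lexx 0)) _.
by apply: ler_wpM2r; [rewrite invr_ge0 | exact: ww_mono].
Qed.

Lemma hinf_ub eta : 0 < eta -> exists2 dl, 0 < dl &
  forall del, 0 < del -> del <= dl -> hinf del <= hinf 0 + eta.
Proof.
move=> he; have e2 : 0 < eta / 2 by rewrite divr_gt0.
have hi : has_inf [set ww 0 N.+1 / N.+1%:R | N in [set: nat]].
  by split; [exists (ww 0 1 / 1%:R); exists 0%N | exact: hinf_lb].
have [_ [L _ <-] hL] := inf_adherent e2 hi.
have [_ hB] := Bm_spec 0 L.+1.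
have [dl dl0 hdl] := step2 (isT : (0 < L.+1)%N) hB.
exists dl => // del hd0 hdl'.
have hK : forall y, (cc del L.+1 y <= Bm 0 L.+1)%N.
  by move=> y; apply: leq_trans (cc_mono _ _ hdl') (hdl y).
have hM : 0 <= ln ((MM L.+1)%:R : R) by rewrite ln_ge0 // ler1n MM_pos.
have [N0 hN0] := block_ev (isT : (0 < L.+1)%N) (ww_ge0 L.+1 (lexx 0))
  hM (ww_block (ltW hd0) hK) e2.
have h1 := hinf_le N0 (ltW hd0).
have h2 := hN0 N0.+1 (leqnSn _).
move: hL h1 h2; rewrite /hinf.
set a := inf _; set b := inf _; set u := ww del N0.+1 / _; set v := ww 0 L.+1 / _.
move=> h1 h2 h3; lra.
Qed.

Lemma hinf_cvg : hinf @ 0^'+ --> hinf 0.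
Proof.
apply/cvgrPdist_le => e e0; have [dl dl0 h] := hinf_ub e0.
near=> del.
have hd : 0 < del by near: del; exact: nbhs_right_gt.
have hd' : del <= dl by near: del; exact: nbhs_right_le.
have h1 := hinf_ge (ltW hd); have h2 := h del hd hd'.
rewrite ler_norml; apply/andP; split; lra.
Unshelve. all: by end_near.
Qed.

Lemma fib_lim_eq : fib_lim d T pi eps = (hinf 0 * (ln (1 / eps))^-1)%:E.
Proof.
rewrite /fib_lim.
have -> : (fun N => fib_quot d T pi N.+1 eps) =
    (fun N => ((ww 0 N.+1 / N.+1%:R) * (ln (1 / eps))^-1)%:E).
  by apply: funext => N; rewrite fib_quot_eq // ball_quot_eq.
apply: cvg_lim => //; apply: cvg_EFin_k; exact: ww_cvg.
Qed.

Lemma ball_lim_eq : ball_lim d T d' S pi eps = (hinf 0 * (ln (1 / eps))^-1)%:E.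
Proof.
rewrite /ball_lim; apply: cvg_lim => //.
have hnear : {near 0^'+, (fun del => (hinf del * (ln (1 / eps))^-1)%:E) =1
   (fun del => lim ((fun N => ball_quot d T d' S pi N.+1 eps del) @ \oo))}.
  near=> del.
  have hd : 0 < del by near: del; exact: nbhs_right_gt.
  rewrite /=; apply/esym/cvg_lim => //.
  have -> : (fun N => ball_quot d T d' S pi N.+1 eps del) =
    (fun N => ((ww del N.+1 / N.+1%:R) * (ln (1 / eps))^-1)%:E).
    by apply: funext => N; rewrite ball_quot_eq // ltW.
  apply: cvg_EFin_k; apply: ww_cvg; exact: ltW.
apply: cvg_trans (near_eq_cvg hnear) _.
apply: cvg_EFin_k; exact: hinf_cvg.
Unshelve. all: by end_near.
Qed.

End Main.

End Aux.
Import Aux.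
Unset Implicit Arguments. Set Strict Implicit.

Theorem lemma3p2 (R : realType) (X Y : Type)
  (d : X -> X -> R) (T : X -> X) (d' : Y -> Y -> R) (S : Y -> Y)
  (pi : X -> Y) :
  dyn_system d T -> dyn_system d' S ->
  dcontinuous d d' pi -> (forall x, pi (T x) = S (pi x)) ->
  mdimM_upper d T pi = elimsup0 (ball_lim d T d' S pi) /\
  mdimM_lower d T pi = eliminf0 (ball_lim d T d' S pi).
Proof.
move=> [dm hc [Ti [_ _ hT _]]] [dm' hc' [Si [_ _ hS _]]] hpi heq.
have key : forall e, 0 < e -> fib_lim d T pi e = ball_lim d T d' S pi e.
  move=> e he; have [[x0 _]|hX] := pselect (exists x : X, True).
    by rewrite (fib_lim_eq dm hT hc dm' heq he x0) (ball_lim_eq dm hT hc dm' hS hc' hpi heq he x0).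
  have hq : forall N del, ball_quot d T d' S pi N e del = fib_quot d T pi N e.
    move=> N del; rewrite /ball_quot /fib_quot; congr (ereal_sup _ * _)%E.
    apply: eq_imagel => y _; congr logcov; apply/seteqP; split => x _; exfalso; apply: hX; by exists x.
  rewrite /ball_lim.
  have -> : (fun del => lim ((fun N => ball_quot d T d' S pi N.+1 e del) @ \oo)) =
      (fun _ => fib_lim d T pi e).
    apply: funext => del; rewrite /fib_lim.
    have -> : (fun N => ball_quot d T d' S pi N.+1 e del) = (fun N => fib_quot d T pi N.+1 e).
      by apply: funext => N; exact: hq.
    by [].
  by rewrite lim_cst.
split.
  rewrite /mdimM_upper /elimsup0; congr ereal_inf; apply: eq_imagel => r _.
  congr ereal_sup; apply: eq_imagel => e /andP[he _]; exact: key.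
rewrite /mdimM_lower /eliminf0; congr ereal_sup; apply: eq_imagel => r _.
congr ereal_inf; apply: eq_imagel => e /andP[he _]; exact: key.
Qed.
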